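(* Let $\phi$ be a Drinfeld $A[\underline{t}_s]$-module over $\mathbb{T}_s$ with $\phi_\theta=\theta+A_1\tau+\dots+A_r\tau^r$, $A_r\in\mathbb{T}_s^\times$, let $\lambda\in\Lambda_\phi$, and let $f_\lambda(z)=\sum_{n\ge0}\exp_\phi(\lambda/\theta^{n+1})z^n$ be its Anderson generating function. Then: (a) $F_{\delta^0}(\lambda)=\operatorname{Res}_{z=\theta}f_\lambda(z)=-\lambda$; (b) for every $1\le j\le r-1$, \[ F_{\delta^j}(\lambda)=\sum_{n\ge0}\exp_\phi\Big(\frac{\lambda}{\theta^{n+1}}\Big)^{(j)}\theta^n=f_\lambda^{(j)}(z)\big|_{z=\theta}. \]
   Context: $\mathbb{F}_q$ finite field, $\theta,t_1,\dots,t_s,z$ independent variables, $A[\underline{t}_s]=\mathbb{F}_q[\theta,t_1,\dots,t_s]$, $\mathbb{F}_q[\underline{t}_s]=\mathbb{F}_q[t_1,\dots,t_s]$. $\mathbb{C}_\infty$: completion of an algebraic closure of $\mathbb{F}_q((1/\theta))$, $|\theta|_\infty=q$. $\mathbb{T}_s$: Tate algebra of power series in $t_1,\dots,t_s$ over $\mathbb{C}_\infty$ with coefficients tending to $0$, Gauss norm $\|\cdot\|_\infty$. $\tau$ raises $\mathbb{C}_\infty$-coefficients to the $q$-th power, $f^{(n)}=\tau^n(f)$, applied coefficientwise to power series in $z$ (fixing $z$). $\mathbb{T}_s[\tau]$, $\mathbb{T}_s[[\tau]]$: twisted rings with $\tau f=f^{(1)}\tau$, acting by $\sum a_i\tau^i(f)=\sum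 a_if^{(i)}$. A Drinfeld $A[\underline{t}_s]$-module is an $\mathbb{F}_q[\underline{t}_s]$-algebra homomorphism $\phi:A[\underline{t}_s]\to\mathbb{T}_s[\tau]$ with $\phi_\theta=\theta+A_1\tau+\dots+A_r\tau^r$. $\exp_\phi=\sum\alpha_i\tau^i$: unique series with $\alpha_0=1$, $\exp_\phi a=\phi_a\exp_\phi$; it converges on $\mathbb{T}_s$; $\Lambda_\phi=\ker\exp_\phi$. One has $f_\lambda(z)=\sum_{n\ge0}\alpha_n\lambda^{(n)}/(\theta^{q^n}-z)$, a function of $z$ with simple poles at $z=\theta^{q^n}$, and $\operatorname{Res}_{z=\theta}f_\lambda$ denotes its residue at $z=\theta$; for $j\ge1$, $f_\lambda^{(j)}$ converges for $|z|_\infty\le|\theta|_\infty$ so can be evaluated at $z=\theta$. A biderivation is an $\mathbb{F}_q[\underline{t}_s]$-linear map $\eta:A[\underline{t}_s]\to\tau\mathbb{T}_s[\tau]$ with $\eta_{ab}=a\eta_b+\eta_a\phi_b$; it is determined by $\eta_\theta$. $\delta^0$ is the biderivation $\delta^0_a=\phi_a-a$, and for $1\le j\le r-1$, $\delta^j$ is the biderivation with $\delta^j_\theta=\tau^j$. For a biderivation $\eta$, $F_\eta$ is the unique element of $\tau\mathbb{T}_s[[\tau]]$ with $F_\eta\theta-\theta F_\eta=\eta_\theta\exp_\phi$; it converges on every element of $\mathbb{T}_s$. *)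

(* Defs.v *)
From HB Require Import structures.
From mathcomp Require Import all_boot all_order all_algebra.
From mathcomp Require Import Rstruct.
Unset Printing Implicit Defensive.
Import Order.TTheory GRing.Theory Num.Theory.
Local Open Scope ring_scope.

Notation RR := Rdefinitions.R.

Definition nonarch_abs_value {C : fieldType} (av : C -> RR) : Prop :=
  (forall x : C, 0 <= av x) /\
  (forall x : C, av x = 0 <-> x = 0) /\
  (forall x y : C, av (x * y) = av x * av y) /\
  (forall x y : C, av (x + y) <= Num.max (av x) (av y)).

Definition av_complete {C : fieldType} (av : C -> RR) : Prop :=
  forall u : nat -> C,
    (forall eps : RR, 0 < eps -> exists N : nat,
        forall m n : nat, (N <= m)%N -> (N <= n)%N -> av (u m - u n) <= eps) ->
    exists l : C, forall eps : RR, 0 < eps -> exists N : nat,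
        forall n : nat, (N <= n)%N -> av (u n - l) <= eps.

(* c lies in F_q[theta] (F_q = fixed points of x |-> x^q) *)
Definition in_Fq_theta {C : fieldType} (q : nat) (theta c : C) : Prop :=
  exists l : seq C, all (fun a => a ^+ q == a) l /\
                    c = \sum_(i < size l) l`_i * theta ^+ i.

Definition alg_over_Fq_theta {C : fieldType} (q : nat) (theta y : C) : Prop :=
  exists P : {poly C}, P != 0 /\ root P y /\
                       forall i : nat, in_Fq_theta q theta P`_i.

(* (C, av, theta) is (isometrically isomorphic to) C_infty for q = p^e:
   C has characteristic p, is algebraically closed and complete for a
   non-archimedean absolute value with |theta| = q, and the algebraic
   closure of F_q(theta) in C is dense.  These properties determine
   C_infty = completion of an algebraic closure of F_q((1/theta)). *)
Definition is_Cinfty (p e : nat) (C : fieldType) (av : C -> RR) (theta : C)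
  : Prop :=
  prime p /\ (0 < e)%N /\ p \in [pchar C] /\
  GRing.closed_field_axiom C /\
  nonarch_abs_value av /\
  av_complete av /\
  av theta = ((p ^ e)%N)%:R /\
  (forall (x : C) (eps : RR), 0 < eps ->
     exists y : C, alg_over_Fq_theta (p ^ e) theta y /\ av (x - y) <= eps).

(* The Tate algebra T_s: power series in t_1..t_s, coefficients in C. *)
(* An element is a coefficient function on multi-indices.              *)

Definition mi (s : nat) := {ffun 'I_s -> nat}.
Definition mi0 (s : nat) : mi s := [ffun => 0%N].

Definition is_tate {s : nat} {C : fieldType} (av : C -> RR) (f : mi s -> C)
  : Prop :=
  forall eps : RR, 0 < eps -> exists N : nat,
    forall m : mi s, (N < \sum_(i < s) m i)%N -> av (f m) < eps.

Definition tzero (s : nat) (C : fieldType) : mi s -> C := fun _ => 0.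
Definition tone (s : nat) (C : fieldType) : mi s -> C :=
  fun m => if m == mi0 s then 1 else 0.
Definition tadd {s : nat} {C : fieldType} (f g : mi s -> C) : mi s -> C :=
  fun m => f m + g m.
Definition topp {s : nat} {C : fieldType} (f : mi s -> C) : mi s -> C :=
  fun m => - f m.
Definition tsub {s : nat} {C : fieldType} (f g : mi s -> C) : mi s -> C :=
  fun m => f m - g m.
Definition tscale {s : nat} {C : fieldType} (c : C) (f : mi s -> C)
  : mi s -> C := fun m => c * f m.
Definition tconst {s : nat} {C : fieldType} (c : C) : mi s -> C :=
  tscale c (tone s C).

Definition mimax {s : nat} (n : mi s) : nat := (\max_(i < s) n i)%N.

(* Cauchy product of power series in t_1..t_s *)
Definition tmul {s : nat} {C : fieldType} (f g : mi s -> C) : mi s -> C :=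
  fun n =>
    \sum_(a : {ffun 'I_s -> 'I_(mimax n).+1} | [forall i, (a i <= n i)%N])
       f [ffun i => nat_of_ord (a i)] * g [ffun i => (n i - a i)%N].

Definition tfrob {s : nat} {C : fieldType} (q k : nat) (f : mi s -> C)
  : mi s -> C := fun m => f m ^+ (q ^ k)%N.

Definition tate_unit {s : nat} {C : fieldType} (av : C -> RR) (f : mi s -> C)
  : Prop :=
  exists g : mi s -> C, is_tate av g /\ tmul f g = tone s C.

(* Gauss-norm convergence of the series sum_n u n to L in T_s
   (||x|| <= eps  iff  every coefficient has absolute value <= eps) *)
Definition series_to {s : nat} {C : fieldType} (av : C -> RR)
  (u : nat -> mi s -> C) (L : mi s -> C) : Prop :=
  forall eps : RR, 0 < eps -> exists N : nat,
    forall n : nat, (N <= n)%N ->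
      forall m : mi s, av ((\sum_(k < n) u k m) - L m) <= eps.

(* Twisted power series  T_s[[tau]],  tau f = f^{(1)} tau.             *)
(* A twisted series is the sequence of its tau^k coefficients.         *)

Definition twmul {s : nat} {C : fieldType} (q : nat)
  (a b : nat -> mi s -> C) : nat -> mi s -> C :=
  fun n m => \sum_(k < n.+1) tmul (a k) (tfrob q k (b (n - k)%N)) m.

Definition twconst {s : nat} {C : fieldType} (c : C) : nat -> mi s -> C :=
  fun k => if k == 0%N then tconst c else tzero s C.

Definition twtau (s : nat) (C : fieldType) (j : nat) : nat -> mi s -> C :=
  fun k => if k == j then tone s C else tzero s C.

Definition phi_theta {s : nat} {C : fieldType} (theta : C) (r : nat)
  (A : nat -> mi s -> C) : nat -> mi s -> C :=
  fun k => if k == 0%N then tconst theta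
           else if (k <= r)%N then A k else tzero s C.

Definition delta0_theta {s : nat} {C : fieldType} (r : nat)
  (A : nat -> mi s -> C) : nat -> mi s -> C :=
  fun k => if k == 0%N then tzero s C
           else if (k <= r)%N then A k else tzero s C.

Definition is_exp_series {s : nat} {C : fieldType} (q : nat) (theta : C)
  (phith : nat -> mi s -> C) (alpha : nat -> mi s -> C) : Prop :=
  alpha 0%N = tone s C /\
  twmul q alpha (twconst theta) = twmul q phith alpha.

(* beta is F_eta for the biderivation eta with eta_theta = etath:
   beta in tau T_s[[tau]] and  beta theta - theta beta = etath exp_phi *)
Definition is_F_series {s : nat} {C : fieldType} (q : nat) (theta : C)
  (etath alpha beta : nat -> mi s -> C) : Prop :=
  beta 0%N = tzero s C /\
  (forall n : nat,
     tsub (twmul q beta (twconst theta) n) (twmul q (twconst theta) beta n)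
     = twmul q etath alpha n).

(* the terms of  (sum_n a_n tau^n)(f) = sum_n a_n f^{(n)} *)
Definition tw_terms {s : nat} {C : fieldType} (q : nat)
  (a : nat -> mi s -> C) (f : mi s -> C) : nat -> mi s -> C :=
  fun n => tmul (a n) (tfrob q n f).

Definition in_period_lattice {s : nat} {C : fieldType} (av : C -> RR) (q : nat)
  (alpha : nat -> mi s -> C) (lam : mi s -> C) : Prop :=
  is_tate av lam /\ series_to av (tw_terms q alpha lam) (tzero s C).

(* Res_{z=theta} f_lambda = L, where
   f_lambda(z) = sum_n alpha_n lambda^{(n)} / (theta^{q^n} - z),
   and the residue at the simple pole theta is  lim_{z -> theta} (z - theta) f_lambda(z). *)
Definition agf_residue_at_theta {s : nat} {C : fieldType} (av : C -> RR)
  (q : nat) (theta : C) (alpha : nat -> mi s -> C) (lam L : mi s -> C)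
  : Prop :=
  forall eps : RR, 0 < eps -> exists del : RR, 0 < del /\
    forall z : C, 0 < av (z - theta) -> av (z - theta) < del ->
      exists v : mi s -> C,
        series_to av
          (fun n => tscale ((theta ^+ (q ^ n)%N - z)^-1)
                           (tmul (alpha n) (tfrob q n lam))) v /\
        forall m : mi s, av ((z - theta) * v m - L m) <= eps.

(* Main.v *)
Require Import Defs.
From HB Require Import structures.
From mathcomp Require Import all_boot all_order all_algebra.
From mathcomp Require Import Rstruct.
From mathcomp Require Import ring lra.
From Stdlib Require Import FunctionalExtensionality IndefiniteDescription.
Import Order.TTheory GRing.Theory Num.Theory.
Local Open Scope ring_scope.
Set Implicit Arguments. Unset Strict Implicit.


Lemma av0 (C : fieldType) (av : C -> RR) : nonarch_abs_value av -> av 0 = 0.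
Proof. by case=> _ [H _]; apply/H. Qed.

Lemma av_ge0 (C : fieldType) (av : C -> RR) : nonarch_abs_value av -> forall x, 0 <= av x.
Proof. by case. Qed.

Lemma avM (C : fieldType) (av : C -> RR) : nonarch_abs_value av -> forall x y, av (x * y) = av x * av y.
Proof. by case=> _ [_ [H _]]. Qed.

Lemma av_eq0 (C : fieldType) (av : C -> RR) : nonarch_abs_value av -> forall x, av x = 0 -> x = 0.
Proof. by case=> _ [H _] x /H. Qed.

Lemma av1 (C : fieldType) (av : C -> RR) : nonarch_abs_value av -> av 1 = 1.
Proof.
move=> H; have h := avM H 1 1; rewrite mulr1 in h.
have n0 : av 1 != 0 by apply/eqP=> /(av_eq0 H)/eqP; rewrite oner_eq0.
by apply: (mulIf n0); rewrite mul1r -h.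
Qed.

Lemma avN (C : fieldType) (av : C -> RR) : nonarch_abs_value av -> forall x, av (- x) = av x.
Proof.
move=> H x; have h := avM H (-1) (-1); rewrite mulrNN mulr1 av1 // in h.
have g := av_ge0 H (-1).
have e1 : av (-1) = 1 by nra.
by rewrite -mulN1r avM // e1 mul1r.
Qed.

Lemma avD (C : fieldType) (av : C -> RR) : nonarch_abs_value av -> forall x y b, av x <= b -> av y <= b -> av (x + y) <= b.
Proof.
move=> H x y b hx hy; case: H => _ [_ [_ H]]; apply: le_trans (H x y) _.
by rewrite ge_max hx hy.
Qed.

Lemma avB (C : fieldType) (av : C -> RR) : nonarch_abs_value av -> forall x y b, av x <= b -> av y <= b -> av (x - y) <= b.
Proof. by move=> H x y b hx hy; apply: avD => //; rewrite avN. Qed.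

Lemma av_sum (C : fieldType) (av : C -> RR) : nonarch_abs_value av ->
  forall (I : Type) (r : seq I) (P : pred I) (F : I -> C) b, 0 <= b ->
  (forall i, P i -> av (F i) <= b) -> av (\sum_(i <- r | P i) F i) <= b.
Proof.
move=> H I r P F b b0 hF; elim/big_rec: _ => [|i x Pi hx]; first by rewrite av0.
by apply: avD => //; apply: hF.
Qed.

Lemma avX (C : fieldType) (av : C -> RR) : nonarch_abs_value av -> forall x n, av (x ^+ n) = av x ^+ n.
Proof. move=> H x; elim=> [|n IH]; first by rewrite !expr0 av1. by rewrite !exprS avM // IH. Qed.

Lemma avV (C : fieldType) (av : C -> RR) : nonarch_abs_value av -> forall x, av (x ^-1) = (av x)^-1.
Proof.
move=> H x; have [->|nx] := eqVneq x 0; first by rewrite invr0 av0 // invr0.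
have h := avM H x x^-1; rewrite mulfV // av1 // in h.
have n0 : av x != 0 by apply/eqP=> /(av_eq0 H)/eqP; rewrite (negbTE nx).
by apply: (mulfI n0); rewrite -h mulfV.
Qed.

Lemma av_gtB (C : fieldType) (av : C -> RR) : nonarch_abs_value av -> forall x y, av y < av x -> av x <= av (x - y).
Proof.
move=> H x y hlt; case: H => [g [e [m D]]]; have := D (x - y) y; rewrite subrK.
rewrite le_max => /orP [//|h]; by move: (lt_le_trans hlt h); rewrite ltxx.
Qed.

Lemma av_tri (C : fieldType) (av : C -> RR) : nonarch_abs_value av -> forall x y z b, av (x - y) <= b -> av (y - z) <= b -> av (x - z) <= b.
Proof. move=> H x y z b h1 h2; have -> : x - z = (x - y) + (y - z) by ring. exact: avD. Qed.


Lemma le_eps (x b : RR) : (forall eps : RR, 0 < eps -> x <= b + eps) -> x <= b.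
Proof. by move=> h; apply/ler_addgt0Pr. Qed.

Lemma le_addl (x b e : RR) : 0 <= b -> x <= e -> x <= b + e.
Proof. move=> h1 h2. exact: ler_wpDl. Qed.

Lemma sum_split (C : fieldType) (f : nat -> C) n n' : (n <= n')%N ->
  \sum_(k < n') f k - \sum_(k < n) f k = \sum_(n <= k < n') f k.
Proof.
move=> h; rewrite -!(big_mkord xpredT) (big_cat_nat (leq0n n) h) /=; ring.
Qed.

Lemma range_bound (C : fieldType) (av : C -> RR) : nonarch_abs_value av ->
  forall (f : nat -> C) n n' (b : RR), 0 <= b -> (forall k, (n <= k)%N -> av (f k) <= b) ->
  av (\sum_(n <= k < n') f k) <= b.
Proof.
move=> H f n n' b b0 hf; rewrite big_nat_cond; apply: av_sum => // i /andP [/andP [hi _] _].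
exact: hf.
Qed.

Lemma cauchy_pt (C : fieldType) (av : C -> RR) : nonarch_abs_value av ->
  forall (f : nat -> C) N (b : RR), 0 <= b -> (forall k, (N <= k)%N -> av (f k) <= b) ->
  forall a a', (N <= a)%N -> (N <= a')%N ->
  av (\sum_(k < a) f k - \sum_(k < a') f k) <= b.
Proof.
move=> H f N b b0 hf a a' ha ha'.
have -> : \sum_(k < a) f k - \sum_(k < a') f k =
   (\sum_(k < a) f k - \sum_(k < N) f k) - (\sum_(k < a') f k - \sum_(k < N) f k) by ring.
by apply: avB => //; rewrite sum_split //; apply: range_bound.
Qed.

Lemma tail_pt (C : fieldType) (av : C -> RR) : nonarch_abs_value av ->
  forall (f : nat -> C) l n (b : RR), 0 <= b ->
  (forall eps : RR, 0 < eps -> exists N, forall n, (N <= n)%N -> av (\sum_(k < n) f k - l) <= eps) ->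
  (forall k, (n <= k)%N -> av (f k) <= b) ->
  av (l - \sum_(k < n) f k) <= b.
Proof.
move=> H f l n b b0 hc hf; apply: le_eps => eps e0.
have [N hN] := hc eps e0; pose n' := maxn N n.
have -> : l - \sum_(k < n) f k = - (\sum_(k < n') f k - l) + (\sum_(k < n') f k - \sum_(k < n) f k) by ring.
apply: avD => //. rewrite avN. have h := hN n' (leq_maxl N n). by apply: le_addl. exact: H.
rewrite sum_split ?leq_maxr //; apply: le_trans (range_bound H n' b0 hf) _; rewrite lerDl; exact: ltW.
Qed.

Lemma series_tail (C : fieldType) (av : C -> RR) : nonarch_abs_value av ->
  forall s (u : nat -> mi s -> C) L n (b : RR), series_to av u L -> 0 <= b ->
  (forall k m, (n <= k)%N -> av (u k m) <= b) ->
  forall m, av (L m - \sum_(k < n) u k m) <= b.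
Proof.
move=> H s u L n b hs b0 hb m; apply: (tail_pt H (f := fun k => u k m) b0).
  by move=> eps e0; have [N hN] := hs eps e0; exists N => n' hn; apply: hN.
by move=> k hk; apply: hb.
Qed.

Lemma series_terms (C : fieldType) (av : C -> RR) : nonarch_abs_value av ->
  forall s (u : nat -> mi s -> C) L, series_to av u L ->
  forall eps : RR, 0 < eps -> exists N, forall n m, (N <= n)%N -> av (u n m) <= eps.
Proof.
move=> H s u L hs eps e0; have [N hN] := hs eps e0; exists N => n m hn.
have -> : u n m = (\sum_(k < n.+1) u k m - L m) - (\sum_(k < n) u k m - L m).
  rewrite big_ord_recr /=; ring.
by apply: (avB H); apply: hN => //; apply: leqW.
Qed.

Lemma series_exists (C : fieldType) (av : C -> RR) : nonarch_abs_value av -> av_complete av ->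
  forall s (u : nat -> mi s -> C),
  (forall eps : RR, 0 < eps -> exists N, forall n m, (N <= n)%N -> av (u n m) <= eps) ->
  exists L, series_to av u L.
Proof.
move=> H Hc s u hu.
have ex : forall m, exists l, forall eps : RR, 0 < eps -> exists N, forall n, (N <= n)%N ->
    av (\sum_(k < n) u k m - l) <= eps.
  move=> m; apply: (Hc (fun n => \sum_(k < n) u k m)) => eps e0.
  have [N hN] := hu eps e0; exists N => a a' ha ha'.
  apply: (cauchy_pt H (f := fun k => u k m) (N := N)) => //; first lra.
  by move=> k hk; apply: hN.
pose L := fun m => proj1_sig (constructive_indefinite_description _ (ex m)).
have hL : forall m, _ := fun m => proj2_sig (constructive_indefinite_description _ (ex m)).
exists L => eps e0; have [N hN] := hu eps e0; exists N => n hn m.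
have := tail_pt H (f := fun k => u k m) (n := n) (b := eps) (ltW e0) (hL m).
move=> h; rewrite -(avN H) opprB; apply: h => k hk; apply: hN; exact: leq_trans hn hk.
Qed.

Lemma series_ext (C : fieldType) (av : C -> RR) s (u v : nat -> mi s -> C) L L' :
  (forall n m, u n m = v n m) -> (forall m, L m = L' m) -> series_to av u L -> series_to av v L'.
Proof.
move=> huv hL hs eps e0; have [N hN] := hs eps e0; exists N => n hn m.
rewrite -hL; under eq_bigr do rewrite -huv; exact: hN.
Qed.

Lemma series_scale (C : fieldType) (av : C -> RR) : nonarch_abs_value av ->
  forall s (u : nat -> mi s -> C) L c, series_to av u L ->
  series_to av (fun n m => c * u n m) (fun m => c * L m).
Proof.
move=> H s u L c hs eps e0.
have g := av_ge0 H c.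
have e1 : 0 < eps / (av c + 1) by apply: divr_gt0 => //; lra.
have [N hN] := hs _ e1; exists N => n hn m.
rewrite -mulr_sumr -mulrBr avM //.
apply: le_trans (ler_wpM2l g (hN n hn m)) _.
rewrite mulrA ler_pdivrMr; last lra.
nra.
Qed.

Lemma frobD (C : fieldType) Q : [pchar C].-nat Q -> forall x y : C, (x + y) ^+ Q = x ^+ Q + y ^+ Q.
Proof. by move=> hQ x y; rewrite exprDn_pchar. Qed.

Lemma frob0 (C : fieldType) Q : (0 < Q)%N -> (0 : C) ^+ Q = 0.
Proof. by case: Q => // Q _; rewrite expr0n. Qed.

Lemma frobB (C : fieldType) Q : [pchar C].-nat Q -> forall x y : C, (x - y) ^+ Q = x ^+ Q - y ^+ Q.
Proof. by move=> hQ x y; apply/eqP; rewrite eq_sym subr_eq -frobD // subrK. Qed.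

Lemma frob_sum (C : fieldType) Q : [pchar C].-nat Q -> (0 < Q)%N ->
  forall (I : Type) (r : seq I) (P : pred I) (F : I -> C),
  (\sum_(i <- r | P i) F i) ^+ Q = \sum_(i <- r | P i) F i ^+ Q.
Proof.
move=> hQ Q0 I r P F; apply: (big_morph (fun x => x ^+ Q)); first exact: frobD.
exact: frob0.
Qed.

Lemma pow_le_self (x : RR) n : 0 <= x -> x <= 1 -> (0 < n)%N -> x ^+ n <= x.
Proof.
move=> x0 x1; case: n => // n _; rewrite exprS; apply: ler_piMr => //.
exact: exprn_ile1.
Qed.

Lemma series_frob (C : fieldType) (av : C -> RR) : nonarch_abs_value av ->
  forall Q, [pchar C].-nat Q -> (0 < Q)%N ->
  forall s (u : nat -> mi s -> C) L, series_to av u L ->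
  series_to av (fun n m => u n m ^+ Q) (fun m => L m ^+ Q).
Proof.
move=> H Q hQ Q0 s u L hs eps e0.
have e1 : 0 < Num.min eps 1 by rewrite lt_min e0 ltr01.
have [N hN] := hs _ e1; exists N => n hn m.
rewrite -frob_sum // -frobB // avX //.
have h := hN n hn m; have g := av_ge0 H (\sum_(k < n) u k m - L m).
apply: le_trans (pow_le_self _ _ Q0) _ => //.
  by apply: le_trans h _; rewrite ge_min lexx orbT.
by apply: le_trans h _; rewrite ge_min lexx.
Qed.


Lemma le_mimax s (n : mi s) i : (n i <= mimax n)%N.
Proof. rewrite /mimax; exact: (@leq_bigmax _ (fun i => n i) i). Qed.

Lemma tmul_single (C : fieldType) s (n t : mi s) (ht : forall i, (t i <= n i)%N)
  (F : {ffun 'I_s -> 'I_(mimax n).+1} -> C) :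
  (forall a : {ffun 'I_s -> 'I_(mimax n).+1}, [forall i, (a i <= n i)%N] -> [ffun i => nat_of_ord (a i)] != t -> F a = 0) ->
  \sum_(a : {ffun 'I_s -> 'I_(mimax n).+1} | [forall i, (a i <= n i)%N]) F a = F [ffun i => inord (t i)].
Proof.
move=> hF.
have tle : forall i, (t i < (mimax n).+1)%N by move=> i; rewrite ltnS (leq_trans (ht i)) ?le_mimax.
have a0P : [forall i, ([ffun i => (inord (t i) : 'I_(mimax n).+1)] i <= n i)%N].
  by apply/forallP => i; rewrite ffunE inordK.
rewrite (bigD1 _ a0P) /= big1 ?addr0 // => a /andP [ha ne]; apply: hF => //.
apply: contra ne => /eqP e; apply/eqP/ffunP => i; apply: val_inj.
by rewrite ffunE /= inordK // -e ffunE.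
Qed.

Lemma tmul_constr (C : fieldType) s (f : mi s -> C) c n :
  tmul f (tconst c) n = c * f n.
Proof.
rewrite /tmul (tmul_single (t := n)) // => [|a ha ne].
  rewrite /tconst /tscale /tone.
  have -> : [ffun i => nat_of_ord ([ffun i => (inord (n i) : 'I_(mimax n).+1)] i)] = n.
    by apply/ffunP => i; rewrite !ffunE inordK // ltnS le_mimax.
  have -> : [ffun i => (n i - [ffun i => (inord (n i) : 'I_(mimax n).+1)] i)%N] == mi0 s.
    by apply/eqP/ffunP => i; rewrite !ffunE inordK ?subnn // ltnS le_mimax.
  by rewrite mulr1 mulrC.
rewrite /tconst /tscale /tone.
case: eqP => [e|]; last by rewrite !mulr0.
case/negP: ne; apply/eqP/ffunP => i; rewrite ffunE.
have := congr1 (fun g : mi s => g i) e; rewrite !ffunE => /eqP; rewrite subn_eq0 => h.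
by apply/eqP; rewrite eqn_leq h (forallP ha i).
Qed.

Lemma tmul_constl (C : fieldType) s (f : mi s -> C) c n :
  tmul (tconst c) f n = c * f n.
Proof.
rewrite /tmul (tmul_single (t := mi0 s)) => [|i|a ha ne]; last 2 first.
- by rewrite ffunE.
- rewrite /tconst /tscale /tone (negbTE ne); ring.
rewrite /tconst /tscale /tone.
have -> : [ffun i => nat_of_ord ([ffun i => (inord (mi0 s i) : 'I_(mimax n).+1)] i)] = mi0 s.
  by apply/ffunP => i; rewrite !ffunE inordK.
have -> : [ffun i => (n i - [ffun i => (inord (mi0 s i) : 'I_(mimax n).+1)] i)%N] = n.
  by apply/ffunP => i; rewrite !ffunE inordK ?subn0.
by rewrite eqxx mulr1.
Qed.

Lemma tmul_tone (C : fieldType) s (f : mi s -> C) n : tmul (tone s C) f n = f n.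
Proof.
have -> : tone s C = tconst 1 by apply: functional_extensionality => m; rewrite /tconst /tscale mul1r.
by rewrite tmul_constl mul1r.
Qed.

Lemma tmul_scalel (C : fieldType) s (f g : mi s -> C) c n :
  tmul (tscale c f) g n = c * tmul f g n.
Proof. by rewrite /tmul mulr_sumr; apply: eq_bigr => a _; rewrite /tscale mulrA. Qed.

Lemma tmul_scaler (C : fieldType) s (f g : mi s -> C) c n :
  tmul f (tscale c g) n = c * tmul f g n.
Proof. by rewrite /tmul mulr_sumr; apply: eq_bigr => a _; rewrite /tscale; ring. Qed.

Lemma tmul0l (C : fieldType) s (g : mi s -> C) n : tmul (tzero s C) g n = 0.
Proof. by rewrite /tmul big1 // => a _; rewrite /tzero mul0r. Qed.

Lemma tmul0r (C : fieldType) s (g : mi s -> C) n : tmul g (tzero s C) n = 0.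
Proof. by rewrite /tmul big1 // => a _; rewrite /tzero mulr0. Qed.

Lemma tmul_frob (C : fieldType) Q : [pchar C].-nat Q -> (0 < Q)%N ->
  forall s (f g : mi s -> C) n,
  (tmul f g n) ^+ Q = tmul (fun m => f m ^+ Q) (fun m => g m ^+ Q) n.
Proof.
move=> hQ Q0 s f g n; rewrite /tmul frob_sum //; apply: eq_bigr => a _; exact: exprMn.
Qed.

Lemma tmul_bound (C : fieldType) (av : C -> RR) : nonarch_abs_value av ->
  forall s (f g : mi s -> C) (Bf Bg : RR), 0 <= Bf -> 0 <= Bg ->
  (forall m, av (f m) <= Bf) -> (forall m, av (g m) <= Bg) ->
  forall n, av (tmul f g n) <= Bf * Bg.
Proof.
move=> H s f g Bf Bg hf hg bf bg n; apply: (av_sum H); first exact: mulr_ge0.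
move=> a _; rewrite (avM H); apply: ler_pM => //; exact: (av_ge0 H).
Qed.


Lemma q_nat (C : fieldType) p e : prime p -> p \in [pchar C] -> forall k, [pchar C].-nat ((p ^ e) ^ k)%N.
Proof.
move=> pp pc k; rewrite -expnM (eq_pnat _ (pcharf_eq pc)) pnatX pnat_id //.
Qed.

Lemma tfrob_tconst (C : fieldType) s q k (c : C) : (0 < q ^ k)%N ->
  tfrob q k (tconst (s := s) c) = tconst (c ^+ (q ^ k)).
Proof.
move=> h; apply: functional_extensionality => m; rewrite /tfrob /tconst /tscale /tone.
by case: eqP => _; rewrite ?mulr1 ?mulr0 ?frob0 // exprMn expr1n mulr1.
Qed.

Lemma tfrob_tzero (C : fieldType) s q k : (0 < q ^ k)%N -> tfrob q k (tzero s C) = tzero s C.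
Proof. by move=> h; apply: functional_extensionality => m; rewrite /tfrob /tzero frob0. Qed.

Lemma tfrob0 (C : fieldType) s q (f : mi s -> C) : tfrob q 0 f = f.
Proof. by apply: functional_extensionality => m; rewrite /tfrob expn0 expr1. Qed.

Lemma twmul_constr (C : fieldType) s q (a : nat -> mi s -> C) c n m : (0 < q)%N ->
  twmul q a (twconst c) n m = c ^+ (q ^ n) * a n m.
Proof.
move=> q0; have qk : forall k, (0 < q ^ k)%N by move=> k; rewrite expn_gt0 q0.
rewrite /twmul big_ord_recr /= subnn /twconst eqxx tfrob_tconst // tmul_constr.
rewrite big1 ?add0r // => i _.
have -> : (n - i == 0)%N = false by rewrite subn_eq0 leqNgt ltn_ord.
by rewrite tfrob_tzero // tmul0r.
Qed.

Lemma twmul_constl (C : fieldType) s q (b : nat -> mi s -> C) c n m :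
  twmul q (twconst c) b n m = c * b n m.
Proof.
rewrite /twmul big_ord_recl /= subn0 /twconst eqxx tfrob0 tmul_constl.
by rewrite big1 ?addr0 // => i _; rewrite tmul0l.
Qed.

Lemma twmul_phi (C : fieldType) s q (theta : C) r (A alpha : nat -> mi s -> C) n m :
  twmul q (phi_theta theta r A) alpha n m = theta * alpha n m + twmul q (delta0_theta r A) alpha n m.
Proof.
rewrite /twmul !big_ord_recl /= subn0 /phi_theta /delta0_theta eqxx tfrob0 tmul_constl tmul0l add0r.
by congr (_ + _).
Qed.

Lemma twmul_tau (C : fieldType) s q j (alpha : nat -> mi s -> C) n m :
  twmul q (twtau s C j) alpha n m = if (j <= n)%N then alpha (n - j)%N m ^+ (q ^ j) else 0.
Proof.
rewrite /twmul /twtau; case: leqP => hj.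
  have hj' : (j < n.+1)%N by rewrite ltnS.
  rewrite (bigD1 (Ordinal hj')) //= eqxx tmul_tone /tfrob big1 ?addr0 // => i ne.
  have -> : (nat_of_ord i == j) = false by apply/negbTE; apply: contra ne => /eqP e; apply/eqP/val_inj.
  by rewrite tmul0l.
rewrite big1 // => i _; have -> : (nat_of_ord i == j) = false.
  by apply/negbTE; rewrite neq_ltn (leq_trans (ltn_ord i)) // ltnS.
by rewrite tmul0l.
Qed.

Lemma fin_bound (P : nat -> RR -> Prop) :
  (forall k (B B' : RR), B <= B' -> P k B -> P k B') ->
  forall N, (forall k, (k < N)%N -> exists B : RR, 0 <= B /\ P k B) ->
  exists B : RR, 0 <= B /\ forall k, (k < N)%N -> P k B.
Proof.
move=> mono; elim=> [|N IH] h; first by exists 0; split => // k.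
have [B1 [b1 h1]] := IH (fun k hk => h k (leqW hk)).
have [B2 [b2 h2]] := h N (ltnSn N).
exists (B1 + B2); split; first exact: addr_ge0.
move=> k; rewrite ltnS leq_eqVlt => /orP [/eqP ->|hk].
  by apply: mono h2; rewrite lerDr.
by apply: mono (h1 k hk); rewrite lerDl.
Qed.

Lemma tate_bounded (C : fieldType) (av : C -> RR) : nonarch_abs_value av ->
  forall s (f : mi s -> C), is_tate av f -> exists B : RR, 0 <= B /\ forall m, av (f m) <= B.
Proof.
move=> H s f ht; have [N hN] := ht 1 ltr01.
pose B := 1 + \sum_(a : {ffun 'I_s -> 'I_N.+1}) av (f [ffun i => nat_of_ord (a i)]).
have sg : 0 <= \sum_(a : {ffun 'I_s -> 'I_N.+1}) av (f [ffun i => nat_of_ord (a i)]).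
  by apply: sumr_ge0 => a _; apply: (av_ge0 H).
exists B; split; first by rewrite /B; apply: addr_ge0.
move=> m; case: (ltnP N (\sum_(i < s) m i)) => hm.
  by apply: ltW; apply: lt_le_trans (hN m hm) _; rewrite /B lerDl.
have mi_le : forall i, (m i < N.+1)%N.
  move=> i; rewrite ltnS; apply: leq_trans hm.
  by rewrite (bigD1 i) //= leq_addr.
pose a0 : {ffun 'I_s -> 'I_N.+1} := [ffun i => inord (m i)].
have e : [ffun i => nat_of_ord (a0 i)] = m by apply/ffunP => i; rewrite !ffunE inordK.
apply: le_trans (_ : \sum_(a : {ffun 'I_s -> 'I_N.+1}) av (f [ffun i => nat_of_ord (a i)]) <= B); last by rewrite /B lerDr.
rewrite (bigD1 a0) //= e; apply: ler_wpDr => //.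
by apply: sumr_ge0 => a _; apply: (av_ge0 H).
Qed.


Lemma series_shift (C : fieldType) (av : C -> RR) s (u K : nat -> mi s -> C) X j :
  series_to av K X -> (forall n m, (n < j)%N -> u n m = 0) ->
  (forall k m, u (k + j)%N m = K k m) -> series_to av u X.
Proof.
move=> hK h0 hs eps e0; have [N hN] := hK eps e0; exists (N + j)%N => n hn m.
have -> : \sum_(k < n) u k m = \sum_(k < n - j) K k m.
  have hjn : (j <= n)%N by apply: leq_trans hn; rewrite leq_addl.
  have -> : \sum_(k < n) u k m = \sum_(k < n) u k m - \sum_(k < j) u k m.
    by rewrite [\sum_(k < j) _]big1 ?subr0 // => i _; apply: h0.
  rewrite (sum_split (fun k => u k m) hjn).
  have := big_addn 0 n j xpredT (fun k => u k m); rewrite add0n => ->.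
  rewrite big_mkord; apply: eq_bigr => i _; exact: hs.
have hjn : (j <= n)%N by apply: leq_trans hn; rewrite leq_addl.
by apply: hN; rewrite leq_subRL // addnC.
Qed.

Lemma interchange_sum (C : fieldType) (av : C -> RR) : nonarch_abs_value av ->
  forall s (a : nat -> nat -> mi s -> C) R K X,
  (forall eps : RR, 0 < eps -> exists N, forall n k m, ((N <= n)%N \/ (N <= k)%N) -> av (a n k m) <= eps) ->
  (forall n, series_to av (fun k => a n k) (R n)) ->
  (forall k, series_to av (fun n m => a n k m) (K k)) ->
  series_to av K X -> series_to av R X.
Proof.
move=> H s a R K X h1 h2 h3 h4 eps e0.
have [N1 hN1] := h1 eps e0; have [N2 hN2] := h4 eps e0.
exists (maxn N1 N2) => n hn m.
have hn1 : (N1 <= n)%N by apply: leq_trans hn; apply: leq_maxl.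
have hn2 : (N2 <= n)%N by apply: leq_trans hn; apply: leq_maxr.
have -> : \sum_(i < n) R i m - X m =
   \sum_(i < n) (R i m - \sum_(k < n) a i k m) - \sum_(k < n) (K k m - \sum_(i < n) a i k m)
   + (\sum_(k < n) K k m - X m).
  rewrite !sumrB (exchange_big _ _ _ _ _ (fun i k => a (nat_of_ord i) (nat_of_ord k) m)) /=; ring.
have e0' : 0 <= eps by apply: ltW.
apply: (avD H); last exact: hN2.
apply: (avB H); apply: (av_sum H) => // i _.
  apply: (series_tail H (h2 i)) => // k m' hk; apply: hN1; right; exact: leq_trans hn1 hk.
apply: (series_tail H (h3 i) e0') => k m' hk; apply: hN1; left; exact: leq_trans hn1 hk.
Qed.

Lemma pow_small (t : RR) : 0 <= t -> t * 2 <= 1 ->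
  forall eps : RR, 0 < eps -> exists N, forall n, (N <= n)%N -> t ^+ n <= eps.
Proof.
move=> t0 t2 eps e0.
have ie : 0 <= eps^-1 by rewrite invr_ge0 ltW.
exists (Num.bound (eps^-1)) => n hn.
have hb := archi_boundP ie.
have h2 : t ^+ n <= (2 ^+ n)^-1.
  rewrite -exprVn; apply: lerXn2r; rewrite ?nnegrE ?invr_ge0 //.
  by rewrite -div1r ler_pdivlMr // mulrC.
apply: le_trans h2 _.
have hnb : (Num.bound eps^-1)%:R <= (2 ^+ n : RR).
  rewrite -natrX ler_nat; apply: leq_trans hn _; apply: ltnW; exact: ltn_expl.
rewrite -[leRHS]invrK lef_pV2 ?posrE ?exprn_gt0 ?invr_gt0 //.
by apply: le_trans hnb; apply: ltW.
Qed.

Lemma geom_series (C : fieldType) (av : C -> RR) : nonarch_abs_value av ->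
  forall s (x y : C) (g : mi s -> C) (Bg : RR), 0 <= Bg -> (forall m, av (g m) <= Bg) ->
  x != 1 -> (forall eps : RR, 0 < eps -> exists N, forall n, (N <= n)%N -> av (x ^+ n) <= eps) ->
  series_to av (fun n m => y * x ^+ n * g m) (fun m => y * (1 - x)^-1 * g m).
Proof.
move=> H s x y g Bg b0 hg x1 hx eps e0.
set c := av (y * (1 - x)^-1).
have c0 : 0 <= c by apply: (av_ge0 H).
have e1 : 0 < eps / (c * Bg + 1) by apply: divr_gt0 => //; apply: ltr_pwDr => //; apply: mulr_ge0.
have [N hN] := hx _ e1; exists N => n hn m.
have x1' : 1 - x != 0 by rewrite subr_eq0 eq_sym.
have -> : \sum_(k < n) y * x ^+ k * g m - y * (1 - x)^-1 * g m = - (x ^+ n * (y * (1 - x)^-1) * g m).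
  have -> : \sum_(k < n) y * x ^+ k * g m = y * g m * \sum_(k < n) x ^+ k.
    by rewrite mulr_sumr; apply: eq_bigr => k _; ring.
  have e : \sum_(k < n) x ^+ k = (x ^+ n - 1) / (x - 1).
    by rewrite subrX1 mulrAC mulfV ?mul1r // subr_eq0.
  have x1'' : x - 1 != 0 by rewrite subr_eq0.
  rewrite e; field; by rewrite x1' x1''.
rewrite (avN H) (avM H) (avM H (x ^+ n)) -/c.
have hxn := hN n hn; have hgm := hg m.
have ax := av_ge0 H (x ^+ n); have ag := av_ge0 H (g m).
have D0 : 0 < c * Bg + 1 by apply: ltr_pwDr => //; apply: mulr_ge0.
have h1 : av (x ^+ n) * c <= eps / (c * Bg + 1) * c by apply: ler_wpM2r.
have h2 : av (x ^+ n) * c * av (g m) <= eps / (c * Bg + 1) * c * Bg.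
  by apply: ler_pM => //; apply: mulr_ge0.
apply: le_trans h2 _.
have -> : eps / (c * Bg + 1) * c * Bg = eps * ((c * Bg) / (c * Bg + 1)) by ring.
apply: ler_piMr; first exact: ltW.
by rewrite ler_pdivrMr // mul1r lerDl.
Qed.


Lemma q_gt1 p e : prime p -> (0 < e)%N -> (1 < p ^ e)%N.
Proof. by move=> pp e0; have := ltn_exp2l 0 e (prime_gt1 pp); rewrite expn0 e0. Qed.

Lemma theta_facts p e (C : fieldType) (av : C -> RR) theta :
  is_Cinfty p e C av theta -> forall n, (0 < n)%N ->
  1 <= av (theta ^+ ((p ^ e) ^ n) - theta) /\ theta ^+ ((p ^ e) ^ n) - theta != 0.
Proof.
case=> pp [e0 [pc [_ [Hav [_ [Hth _]]]]]] n n0.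
have q1 := q_gt1 pp e0; set q := (p ^ e)%N in q1 Hth *.
have lt : av theta < av (theta ^+ (q ^ n)).
  rewrite (avX Hav) Hth -natrX ltr_nat.
  have := ltn_exp2l 1 (q ^ n) q1; rewrite expn1 => ->.
  apply: (leq_trans q1); have := leq_pexp2l (ltnW q1) n0; by rewrite expn1.
have h := av_gtB Hav lt.
have h1 : 1 <= av theta by rewrite Hth ler1n ltnW.
have g : 1 <= av (theta ^+ (q ^ n) - theta).
  apply: le_trans h; apply: le_trans h1 _; exact: ltW.
split => //; apply/eqP => e'; move: g; rewrite e' (av0 Hav); lra.
Qed.

Lemma pow_bound (C : fieldType) (av : C -> RR) : nonarch_abs_value av ->
  forall (x : C) (B : RR) n, 0 <= B -> av x <= B -> av (x ^+ n) <= B ^+ n.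
Proof. by move=> H x B n B0 h; rewrite (avX H); apply: lerXn2r; rewrite ?nnegrE ?(av_ge0 H). Qed.

Lemma alpha_bounded p e (C : fieldType) (av : C -> RR) theta s r (A alpha : nat -> mi s -> C) :
  is_Cinfty p e C av theta ->
  (forall k : nat, (1 <= k <= r)%N -> is_tate av (A k)) ->
  is_exp_series (p ^ e) theta (phi_theta theta r A) alpha ->
  forall n, exists B : RR, 0 <= B /\ forall m, av (alpha n m) <= B.
Proof.
move=> HC HA [ha0 hrec]; have HC' := HC.
case: HC' => pp [e0 [pc [_ [Hav _]]]].
have q1 := q_gt1 pp e0; set q := (p ^ e)%N in q1 hrec *.
have q0 : (0 < q)%N by apply: ltnW.
have qk : forall k, (0 < q ^ k)%N by move=> k; rewrite expn_gt0 q0.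
elim/ltn_ind => n IH.
case: n IH => [|n] IH.
  exists 1; split => // m; rewrite ha0 /tone; case: eqP => _; rewrite ?(av1 Hav) ?(av0 Hav) //.
have rec : forall m, theta ^+ (q ^ n.+1) * alpha n.+1 m = theta * alpha n.+1 m +
    twmul q (delta0_theta r A) alpha n.+1 m.
  move=> m; have := congr1 (fun F => F n.+1 m) hrec; rewrite /= twmul_constr // => ->.
  exact: twmul_phi.
pose P k (B : RR) := forall m, av (tmul (delta0_theta r A k) (tfrob q k (alpha (n.+1 - k)%N)) m) <= B.
have [B [B0 hB]] : exists B : RR, 0 <= B /\ forall k, (k < n.+2)%N -> P k B.
  apply: fin_bound => [k B B' le h m|k hk]; first exact: le_trans (h m) le.
  rewrite /P /delta0_theta; case: eqP => [_|k0].
    by exists 0; split => // m; rewrite tmul0l (av0 Hav).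
  case: ifP => kr; last by exists 0; split => // m; rewrite tmul0l (av0 Hav).
  have k1 : (1 <= k)%N by rewrite lt0n; apply/eqP.
  have [BA [BA0 hBA]] := tate_bounded Hav (HA k (introT andP (conj k1 kr))).
  have lt_nk : (n.+1 - k < n.+1)%N by rewrite ltn_subrL k1.
  have [Ba [Ba0 hBa]] := IH (n.+1 - k)%N lt_nk.
  exists (BA * Ba ^+ (q ^ k)); split; first by apply: mulr_ge0 => //; apply: exprn_ge0.
  move=> m; apply: (tmul_bound Hav) => //; first exact: exprn_ge0.
  by move=> m'; rewrite /tfrob; apply: (pow_bound Hav).
exists B; split => // m.
have [d1 dn] := theta_facts HC (ltn0Sn n).
have e' : alpha n.+1 m = (theta ^+ (q ^ n.+1) - theta)^-1 * twmul q (delta0_theta r A) alpha n.+1 m.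
  apply: (mulfI dn); rewrite mulrA mulfV // mul1r mulrBl rec; ring.
have dB : av (twmul q (delta0_theta r A) alpha n.+1 m) <= B.
  by rewrite /twmul; apply: (av_sum Hav) => // i _; exact: hB.
rewrite e' (avM Hav) (avV Hav); apply: (le_trans _ dB); apply: ler_piMl.
  exact: (av_ge0 Hav).
by rewrite invf_le1 //; apply: lt_le_trans d1; apply: ltr01.
Qed.


Lemma c_bounded p e (C : fieldType) (av : C -> RR) theta s r (A alpha : nat -> mi s -> C) lam :
  is_Cinfty p e C av theta ->
  (forall k : nat, (1 <= k <= r)%N -> is_tate av (A k)) ->
  is_exp_series (p ^ e) theta (phi_theta theta r A) alpha ->
  in_period_lattice av (p ^ e) alpha lam ->
  exists B : RR, 0 <= B /\ forall k m, av (tw_terms (p ^ e) alpha lam k m) <= B.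
Proof.
move=> HC HA Hal [lt ls]; have HC' := HC; case: HC' => pp [e0 [pc [_ [Hav _]]]].
have [Bl [Bl0 hBl]] := tate_bounded Hav lt.
have [N hN] := series_terms Hav ls ltr01.
have [B [B0 hB]] : exists B : RR, 0 <= B /\ forall k, (k < N)%N ->
    forall m, av (tw_terms (p ^ e) alpha lam k m) <= B.
  apply: fin_bound => [k B B' le h m|k hk]; first exact: le_trans (h m) le.
  have [Ba [Ba0 hBa]] := alpha_bounded HC HA Hal k.
  exists (Ba * Bl ^+ ((p ^ e) ^ k)); split; first by apply: mulr_ge0 => //; apply: exprn_ge0.
  move=> m; apply: (tmul_bound Hav) => //; first exact: exprn_ge0.
  by move=> m'; rewrite /tfrob; apply: (pow_bound Hav).
exists (B + 1); split; first by apply: addr_ge0.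
move=> k m; case: (ltnP k N) => hk.
  by apply: le_trans (hB k hk m) _; rewrite lerDl.
by apply: le_trans (hN k m hk) _; rewrite lerDr.
Qed.


Lemma part_a p e (C : fieldType) (av : C -> RR) theta s r (A alpha : nat -> mi s -> C) lam :
  is_Cinfty p e C av theta ->
  (forall k : nat, (1 <= k <= r)%N -> is_tate av (A k)) ->
  is_exp_series (p ^ e) theta (phi_theta theta r A) alpha ->
  in_period_lattice av (p ^ e) alpha lam ->
  forall beta0 : nat -> mi s -> C,
     is_F_series (p ^ e) theta (delta0_theta r A) alpha beta0 ->
     series_to av (tw_terms (p ^ e) beta0 lam) (topp lam) /\
     agf_residue_at_theta av (p ^ e) theta alpha lam (topp lam).
Proof.
move=> HC HA Hal Hlam beta0 [hb0 hb].
have HC' := HC; case: HC' => pp [e0 [pc [_ [Hav [Hcomp [Hth _]]]]]].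
have [cB [cB0 hcB]] := c_bounded HC HA Hal Hlam.
case: Hal => [ha0 hrec]; case: Hlam => [lt ls].
have q1 := q_gt1 pp e0.
have q0 : (0 < p ^ e)%N by apply: ltnW.
have rec : forall n m, theta ^+ ((p ^ e) ^ n) * alpha n m = theta * alpha n m +
    twmul (p ^ e) (delta0_theta r A) alpha n m.
  move=> n m; have := congr1 (fun F => F n m) hrec; rewrite /= twmul_constr // => ->.
  exact: twmul_phi.
have c0 : forall m, tw_terms (p ^ e) alpha lam 0 m = lam m.
  by move=> m; rewrite /tw_terms ha0 tfrob0 tmul_tone.
have hbeta : forall n, (0 < n)%N -> beta0 n = alpha n.
  move=> n n0; apply: functional_extensionality => m.
  have h1 := congr1 (fun F => F m) (hb n); rewrite /tsub /= twmul_constr // twmul_constl in h1.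
  have h2 := rec n m.
  have [_ dn] := theta_facts HC n0.
  apply/eqP; rewrite -subr_eq0; apply/eqP; apply: (mulfI dn); rewrite mulr0.
  have -> : (theta ^+ ((p ^ e) ^ n) - theta) * (beta0 n m - alpha n m) =
     (theta ^+ ((p ^ e) ^ n) * beta0 n m - theta * beta0 n m) -
     (theta ^+ ((p ^ e) ^ n) * alpha n m - theta * alpha n m) by ring.
  rewrite h1 h2; ring.
split.
  move=> eps e1; have [N hN] := ls eps e1; exists N.+1 => n hn m.
  case: n hn => // n hn.
  have := hN n.+1 (ltnW hn) m.
  rewrite !big_ord_recl /= c0 /tw_terms hb0 tmul0l /topp /tzero.
  have -> : \sum_(i < n) tmul (beta0 (bump 0 i)) (tfrob (p ^ e) (bump 0 i) lam) m =
            \sum_(i < n) tmul (alpha (bump 0 i)) (tfrob (p ^ e) (bump 0 i) lam) m.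
    by apply: eq_bigr => i _; rewrite hbeta.
  by rewrite subr0 opprK addrC add0r.
move=> eps e1.
pose del := Num.min 1 (eps / (cB + 1)).
have D0 : 0 < cB + 1 by apply: ltr_pwDr.
have del0 : 0 < del by rewrite lt_min ltr01 divr_gt0.
exists del; split => // z hz1 hz2.
have hz1' : av (z - theta) < 1 by apply: lt_le_trans hz2 _; rewrite ge_min lexx.
have zt : z - theta != 0 by apply/eqP => e'; move: hz1; rewrite e' (av0 Hav) ltxx.
have hterm : forall n m, (0 < n)%N ->
    av ((theta ^+ ((p ^ e) ^ n) - z)^-1 * tmul (alpha n) (tfrob (p ^ e) n lam) m)
    <= av (tw_terms (p ^ e) alpha lam n m).
  move=> n m n0; have [d1 _] := theta_facts HC n0.
  have g : 1 <= av (theta ^+ ((p ^ e) ^ n) - z).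
    apply: (le_trans d1).
    have -> : theta ^+ ((p ^ e) ^ n) - z = (theta ^+ ((p ^ e) ^ n) - theta) - (z - theta) by ring.
    apply: (av_gtB Hav); exact: lt_le_trans hz1' d1.
  rewrite (avM Hav) (avV Hav); apply: ler_piMl; first exact: (av_ge0 Hav).
  by rewrite invf_le1 //; apply: lt_le_trans g; apply: ltr01.
pose u := fun n => tscale ((theta ^+ ((p ^ e) ^ n) - z)^-1) (tmul (alpha n) (tfrob (p ^ e) n lam)).
have hu : forall eps' : RR, 0 < eps' -> exists N, forall n m, (N <= n)%N -> av (u n m) <= eps'.
  move=> eps' e'; have [N hN] := series_terms Hav ls e'.
  exists N.+1 => n m hn; rewrite /u /tscale.
  case: n hn => // n hn.
  by apply: le_trans (hterm n.+1 m (ltn0Sn n)) _; apply: hN; apply: ltnW.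
have [v hv] := series_exists Hav Hcomp hu.
exists v; split => // m.
have t0 := series_tail Hav (n := 1) hv cB0 (fun k m' hk => le_trans (hterm k m' hk) (hcB k m')) m.
rewrite big_ord1 /u /tscale /= in t0.
have u0 : tmul (alpha 0) (tfrob (p ^ e) 0 lam) m = lam m by rewrite ha0 tfrob0 tmul_tone.
rewrite u0 expn0 expr1 in t0.
have tz : theta - z != 0 by rewrite -oppr_eq0 opprB.
have -> : (z - theta) * v m - topp lam m = (z - theta) * (v m - (theta - z)^-1 * lam m).
  rewrite /topp; field; exact: tz.
rewrite (avM Hav).
have a0 := av_ge0 Hav (v m - (theta - z)^-1 * lam m).
apply: le_trans (_ : del * cB <= eps).
  apply: ler_pM => //; [exact: (av_ge0 Hav)| exact: ltW].
apply: le_trans (_ : eps / (cB + 1) * cB <= eps).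
  by apply: ler_wpM2r => //; rewrite ge_min lexx orbT.
have -> : eps / (cB + 1) * cB = eps * (cB / (cB + 1)) by ring.
apply: ler_piMr; first exact: ltW.
by rewrite ler_pdivrMr // mul1r lerDl.
Qed.


Lemma prod3 (a b d T D : RR) : 0 <= a -> a <= 1 -> 0 <= b -> b <= T -> 0 <= d -> d <= D ->
  a * b * d <= T * D.
Proof.
move=> a0 a1 b0 bT d0 dD.
have ab : a * b <= T by apply: le_trans (ler_piMl b0 a1) bT.
by apply: ler_pM => //; apply: mulr_ge0.
Qed.

Lemma part_b p e (C : fieldType) (av : C -> RR) theta s r (A alpha : nat -> mi s -> C) lam
  (exp_lam : nat -> mi s -> C) :
  is_Cinfty p e C av theta ->
  (forall k : nat, (1 <= k <= r)%N -> is_tate av (A k)) ->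
  is_exp_series (p ^ e) theta (phi_theta theta r A) alpha ->
  in_period_lattice av (p ^ e) alpha lam ->
  (forall n : nat,
      series_to av (tw_terms (p ^ e) alpha (tscale (theta ^- n.+1) lam))
                (exp_lam n)) ->
  forall (j : nat) (betaj : nat -> mi s -> C),
     (1 <= j <= r - 1)%N ->
     is_F_series (p ^ e) theta (twtau s C j) alpha betaj ->
     exists X : mi s -> C,
       series_to av (tw_terms (p ^ e) betaj lam) X /\
       series_to av (fun n => tscale (theta ^+ n) (tfrob (p ^ e) j (exp_lam n))) X.
Proof.
move=> HC HA Hal Hlam Hexp j betaj /andP [j1 _] [hb0 hb].
have HC' := HC; case: HC' => pp [e0 [pc [_ [Hav [Hcomp [Hth _]]]]]].
have [cB [cB0 hcB]] := c_bounded HC HA Hal Hlam.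
case: Hlam => [lt ls].
have q1 := q_gt1 pp e0.
have q0 : (0 < p ^ e)%N by apply: ltnW.
have qk : forall k, (0 < (p ^ e) ^ k)%N by move=> k; rewrite expn_gt0 q0.
have hnat := q_nat e pp pc.
pose Q := ((p ^ e) ^ j)%N.
pose c := tw_terms (p ^ e) alpha lam.
have hbet : forall n m, (0 < n)%N -> (theta ^+ ((p ^ e) ^ n) - theta) * betaj n m =
    if (j <= n)%N then alpha (n - j)%N m ^+ Q else 0.
  move=> n m n0; have h1 := congr1 (fun F => F m) (hb n).
  by rewrite /tsub /= twmul_constr // twmul_constl twmul_tau in h1; rewrite -h1 mulrBl.
have hzero : forall n, (n < j)%N -> betaj n = tzero s C.
  move=> n hn; apply: functional_extensionality => m.
  case: n hn => [|n] hn; first by rewrite hb0.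
  have := hbet n.+1 m (ltn0Sn n); rewrite leqNgt hn /=.
  have [_ dn] := theta_facts HC (ltn0Sn n).
  by move/eqP; rewrite mulf_eq0 (negbTE dn) /= => /eqP.
have hterm : forall k m, tw_terms (p ^ e) betaj lam (k + j)%N m =
    (theta ^+ ((p ^ e) ^ (k + j)) - theta)^-1 * c k m ^+ Q.
  move=> k m.
  have kj0 : (0 < k + j)%N by apply: leq_trans j1 _; rewrite leq_addl.
  have [_ dn] := theta_facts HC kj0.
  have hv : betaj (k + j)%N = tscale ((theta ^+ ((p ^ e) ^ (k + j)) - theta)^-1)
                                    (tfrob (p ^ e) j (alpha k)).
    apply: functional_extensionality => m'.
    have := hbet (k + j)%N m' kj0; rewrite leq_addl addnK => h.
    by rewrite /tscale /tfrob -h mulrA mulVf ?mul1r.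
  rewrite /tw_terms hv tmul_scalel; congr (_ * _).
  have -> : tfrob (p ^ e) (k + j) lam = (fun m' => tfrob (p ^ e) k lam m' ^+ Q).
    by apply: functional_extensionality => m'; rewrite /tfrob expnD exprM.
  by rewrite /c /tw_terms (tmul_frob (hnat j) (qk j)).
have eB : forall k m, av (c k m ^+ Q) <= cB ^+ Q by move=> k m; apply: (pow_bound Hav).
have esmall : forall k m, av (c k m) <= 1 -> av (c k m ^+ Q) <= av (c k m).
  by move=> k m h; rewrite (avX Hav); apply: pow_le_self; [exact: (av_ge0 Hav) | exact: h | exact: qk].
have dinv1 : forall n, (0 < n)%N -> av ((theta ^+ ((p ^ e) ^ n) - theta)^-1) <= 1.
  move=> n n0; have [d1 _] := theta_facts HC n0.
  by rewrite (avV Hav) invf_le1 //; apply: lt_le_trans d1; apply: ltr01.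
have kj0 : forall k, (0 < k + j)%N by move=> k; apply: leq_trans j1 _; rewrite leq_addl.
pose K := fun k m => (theta ^+ ((p ^ e) ^ (k + j)) - theta)^-1 * c k m ^+ Q.
have Ksmall : forall eps : RR, 0 < eps -> exists N, forall k m, (N <= k)%N -> av (K k m) <= eps.
  move=> eps ep; have e1 : 0 < Num.min eps 1 by rewrite lt_min ep ltr01.
  have [N hN] := series_terms Hav ls e1; exists N => k m hk.
  have h := hN k m hk.
  have h1 : av (c k m) <= 1 by apply: le_trans h _; rewrite ge_min lexx orbT.
  have h2 : av (c k m) <= eps by apply: le_trans h _; rewrite ge_min lexx.
  rewrite /K (avM Hav).
  have g := av_ge0 Hav (c k m ^+ Q).
  apply: le_trans (ler_piMl g (dinv1 _ (kj0 k))) _.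
  exact: le_trans (esmall k m h1) h2.
have [X hX] := series_exists Hav Hcomp Ksmall.
exists X; split.
  apply: (series_shift hX (j := j)) => [n m hn|k m]; last exact: hterm.
  by rewrite /tw_terms hzero // tmul0l.
have th0 : theta != 0.
  by apply/eqP => t0; move: Hth; rewrite t0 (av0 Hav) => /esym/eqP; rewrite pnatr_eq0 eqn0Ngt q0.

pose P := fun k => ((p ^ e) ^ (k + j))%N.
pose y := fun k => (theta ^+ P k)^-1.
pose x := fun k => theta * y k.
pose a := fun n k m => theta ^+ n * (tw_terms (p ^ e) alpha (tscale (theta ^- n.+1) lam) k m) ^+ Q.
have hid : forall n k m, a n k m = y k * x k ^+ n * c k m ^+ Q.
  move=> n k m; rewrite /a /tw_terms.
  have -> : tfrob (p ^ e) k (tscale (theta ^- n.+1) lam) =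
      tscale ((theta ^- n.+1) ^+ ((p ^ e) ^ k)) (tfrob (p ^ e) k lam).
    by apply: functional_extensionality => m'; rewrite /tfrob /tscale exprMn.
  rewrite tmul_scaler exprMn -exprM -expnD -/(P k) /c /tw_terms.
  have -> : (theta ^- n.+1) ^+ P k = (y k) ^+ n.+1.
    by rewrite /y !exprVn -!exprM mulnC.
  rewrite /x exprS exprMn; ring.
have P2 : forall k, (p ^ e * 2 <= (p ^ e) ^ P k)%N.
  move=> k; apply: (@leq_trans ((p ^ e) ^ 2)); first by rewrite expnS expn1 leq_mul2l q1 orbT.
  apply: leq_pexp2l => //; apply: (@leq_trans (p ^ e)) => //.
  by have := leq_pexp2l q0 (kj0 k); rewrite expn1.
have avy : forall k, av (y k) = (((p ^ e) ^ P k)%:R)^-1.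
  by move=> k; rewrite /y (avV Hav) (avX Hav) Hth -natrX.
have y1 : forall k, av (y k) <= 1.
  move=> k; rewrite avy invf_le1; last by rewrite ltr0n expn_gt0 q0.
  by rewrite ler1n expn_gt0 q0.
have x2 : forall k, av (x k) * 2 <= 1.
  move=> k; rewrite /x (avM Hav) avy Hth.
  have hp : (0 : RR) < ((p ^ e) ^ P k)%:R by rewrite ltr0n expn_gt0 q0.
  rewrite mulrAC ler_pdivrMr // mul1r -natrM ler_nat; exact: P2.
have x1 : forall k, x k != 1.
  move=> k; apply/eqP => e1; have := x2 k; rewrite e1 (av1 Hav); lra.
have xs : forall k, av (x k) <= 2^-1.
  move=> k; have := x2 k; rewrite -div1r ler_pdivlMr //.
have xpow : forall k n, av (x k ^+ n) <= (2^-1) ^+ n.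
  move=> k n; apply: (pow_bound Hav) => //; rewrite invr_ge0; lra.
have cQ0 : 0 <= cB ^+ Q by apply: exprn_ge0.
apply: (@interchange_sum _ _ Hav _ a (fun n => tscale (theta ^+ n) (tfrob (p ^ e) j (exp_lam n))) K X) => //.
- move=> eps ep; have e1 : 0 < Num.min eps 1 by rewrite lt_min ep ltr01.
  have [Nk hNk] := series_terms Hav ls e1.
  have e2 : 0 < eps / (cB ^+ Q + 1) by apply: divr_gt0 => //; apply: ltr_pwDr.
  have ht0 : (0 : RR) <= 2^-1 by rewrite invr_ge0.
  have ht2 : (2^-1 : RR) * 2 <= 1 by rewrite mulVf ?pnatr_eq0.
  have [Nn hNn] := pow_small ht0 ht2 e2.
  exists (maxn Nk Nn) => n k m hnk.
  rewrite hid (avM Hav) (avM Hav).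
  have ay := av_ge0 Hav (y k); have ax := av_ge0 Hav (x k ^+ n); have ac := av_ge0 Hav (c k m ^+ Q).
  case: hnk => h.
    have hn : (Nn <= n)%N by apply: leq_trans h; apply: leq_maxr.
    apply: le_trans (_ : eps / (cB ^+ Q + 1) * cB ^+ Q <= eps).
      apply: prod3 => //; first exact: (le_trans (xpow k n) (hNn n hn)).
    have -> : eps / (cB ^+ Q + 1) * cB ^+ Q = eps * (cB ^+ Q / (cB ^+ Q + 1)) by ring.
    apply: ler_piMr; first exact: ltW.
    by rewrite ler_pdivrMr ?mul1r ?lerDl //; apply: ltr_pwDr.
  have hk : (Nk <= k)%N by apply: leq_trans h; apply: leq_maxl.
  have hc := hNk k m hk.
  have h1 : av (c k m) <= 1 by apply: le_trans hc _; rewrite ge_min lexx orbT.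
  have h2 : av (c k m) <= eps by apply: le_trans hc _; rewrite ge_min lexx.
  rewrite -[eps]mul1r; apply: prod3 => //.
    apply: le_trans (xpow k n) _; apply: exprn_ile1 => //; by rewrite invf_le1 // ler1n.
  exact: le_trans (esmall k m h1) h2.
- move=> n; have := series_scale Hav (theta ^+ n) (series_frob Hav (hnat j) (qk j) (Hexp n)).
  by apply: series_ext.
- move=> k.
  have xsm : forall eps : RR, 0 < eps -> exists N, forall n, (N <= n)%N -> av (x k ^+ n) <= eps.
    move=> eps ep; have [N hN] := pow_small (av_ge0 Hav (x k)) (x2 k) ep.
    by exists N => n hn; rewrite (avX Hav); apply: hN.
  have G := geom_series Hav (y k) cQ0 (eB k) (x1 k) xsm.
  have [_ dn] := theta_facts HC (kj0 k).
  have tP : theta ^+ P k != 0 by rewrite expf_neq0.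
  have ey : y k * (1 - x k)^-1 = (theta ^+ ((p ^ e) ^ (k + j)) - theta)^-1.
    rewrite /x /y -/(P k) -invfM; congr (_^-1).
    by rewrite mulrBr mulr1 mulrCA mulfV // mulr1.
  apply: (series_ext _ _ G) => [n m|m]; first by rewrite hid.
  by rewrite ey.
Qed.

Unset Implicit Arguments. Set Strict Implicit.

Theorem proposition5p7
  (p e : nat) (C : fieldType) (av : C -> RR) (theta : C)
  (HC : is_Cinfty p e C av theta)
  (s r : nat) (A : nat -> mi s -> C)
  (Hr : (0 < r)%N)
  (HA : forall k : nat, (1 <= k <= r)%N -> is_tate av (A k))
  (HAr : tate_unit av (A r))
  (alpha : nat -> mi s -> C)
  (Halpha : is_exp_series (p ^ e) theta (phi_theta theta r A) alpha)
  (lam : mi s -> C)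
  (Hlam : in_period_lattice av (p ^ e) alpha lam)
  (* exp_lam n = exp_phi (lam / theta^{n+1}), the coefficients of f_lam *)
  (exp_lam : nat -> mi s -> C)
  (Hexp_lam : forall n : nat,
      series_to av (tw_terms (p ^ e) alpha (tscale (theta ^- n.+1) lam))
                (exp_lam n)) :
  (* (a) *)
  (forall beta0 : nat -> mi s -> C,
     is_F_series (p ^ e) theta (delta0_theta r A) alpha beta0 ->
     series_to av (tw_terms (p ^ e) beta0 lam) (topp lam) /\
     agf_residue_at_theta av (p ^ e) theta alpha lam (topp lam)) /\
  (* (b) *)
  (forall (j : nat) (betaj : nat -> mi s -> C),
     (1 <= j <= r - 1)%N ->
     is_F_series (p ^ e) theta (twtau s C j) alpha betaj ->
     exists X : mi s -> C,
       series_to av (tw_terms (p ^ e) betaj lam) X /\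
       (* X = sum_n exp_phi(lam/theta^{n+1})^{(j)} theta^n = f_lam^{(j)}(theta) *)
       series_to av (fun n => tscale (theta ^+ n) (tfrob (p ^ e) j (exp_lam n))) X).
Proof.
split.
  exact: (part_a HC HA Halpha Hlam).
exact: (part_b HC HA Halpha Hlam Hexp_lam).
Qed.
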